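(* Let $X$ be a $T_1$ space and $\mathcal{P}$ an ideal of closed subsets of $X$ containing every singleton subset of $X$. Then $C(X)_\mathcal{P}$ is an Artinian ring if and only if $X$ is finite.
   Context: An ideal of closed subsets of $X$ is a family $\mathcal{P}$ of closed subsets closed under finite unions and under passing to closed subsets. $D_f$ is the set of discontinuity points of $f\in\mathbb{R}^X$; $C(X)_\mathcal{P}=\{f\in\mathbb{R}^X\colon\overline{D_f}\in\mathcal{P}\}$ with pointwise operations. *)

(* Defs.v *)
From HB Require Import structures.
From mathcomp Require Import all_boot all_order all_algebra.
From mathcomp Require Import all_classical all_reals all_analysis.
Set Implicit Arguments. Unset Strict Implicit. Unset Printing Implicit Defensive.
Import Order.TTheory GRing.Theory Num.Theory.
Import numFieldNormedType.Exports.
Local Open Scope classical_set_scope.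
Local Open Scope ring_scope.

Definition closed_ideal {X : topologicalType} (P : set (set X)) : Prop :=
  [/\ forall A, P A -> closed A,
      P set0,
      forall A B, P A -> P B -> P (A `|` B)
    & forall A B, P A -> closed B -> B `<=` A -> P B].

Definition discont {X : topologicalType} {R : realType} (f : X -> R) : set X :=
  [set x : X | ~ (f @ x --> f x)].

(* C(X)_P as a subset of R^X (with pointwise operations) *)
Definition CP {X : topologicalType} {R : realType} (P : set (set X)) : set (X -> R) :=
  [set f | P (closure (discont f))].

Definition CP_ideal {X : topologicalType} {R : realType} (P : set (set X))
    (I : set (X -> R)) : Prop :=
  [/\ I `<=` CP P,
      I (fun _ => 0),
      forall f g, I f -> I g -> I (f \+ g),
      forall f, I f -> I (fun x => - f x)
    & forall f g, CP P g -> I f -> I (g \* f)].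

Definition CP_artinian {X : topologicalType} {R : realType} (P : set (set X)) : Prop :=
  forall I : nat -> set (X -> R),
    (forall n, CP_ideal P (I n)) ->
    (forall n, I n.+1 `<=` I n) ->
    exists N, forall n, (N <= n)%N -> I n = I N.

(* Main.v *)
Require Import Defs.
From HB Require Import structures.
From mathcomp Require Import all_boot all_order all_algebra.
From mathcomp Require Import all_classical all_reals all_analysis.
Import numFieldNormedType.Exports.
Local Open Scope classical_set_scope.

Section Helpers.
Import GRing.Theory Num.Theory.
Local Open Scope ring_scope.
Context {R : realType} {X : topologicalType}.

Lemma discontD (f g : X -> R) : discont (f \+ g) `<=` discont f `|` discont g.
Proof.
move=> x /= H; apply: contrapT => /not_orP [/contrapT Hf /contrapT Hg].
apply: H; exact: (cvgD Hf Hg).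
Qed.

Lemma discontM (f g : X -> R) : discont (f \* g) `<=` discont f `|` discont g.
Proof.
move=> x /= H; apply: contrapT => /not_orP [/contrapT Hf /contrapT Hg].
apply: H; exact: (cvgM Hf Hg).
Qed.

Lemma discontN (f : X -> R) : discont (fun x => - f x) `<=` discont f `|` discont f.
Proof.
move=> x /= H; left => Hf.
apply: H; exact: (cvgN Hf).
Qed.

Lemma discont0 : discont (fun _ : X => 0 : R) = set0.
Proof.
apply/seteqP; split => // x /= H; apply: H; exact: cvg_cst.
Qed.

Lemma CP_sub {P : set (set X)} {f g h : X -> R} : closed_ideal P ->
  discont h `<=` discont f `|` discont g -> CP P f -> CP P g -> CP P h.
Proof.
case=> Pc P0 PU PS sub Pf Pg; rewrite /CP /=.
apply: (PS _ _ (PU _ _ Pf Pg)); first exact: closed_closure.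
rewrite -closureU; exact: closureS.
Qed.

Lemma CP0 {P : set (set X)} : closed_ideal P -> CP P (fun _ : X => 0 : R).
Proof. by case=> _ P0 _ _; rewrite /CP /= discont0 closure0. Qed.

Lemma CP_all {P : set (set X)} {f : X -> R} : closed_ideal P ->
  discont f = set0 -> CP P f.
Proof. by case=> _ P0 _ _ H; rewrite /CP /= H closure0. Qed.

Definition ind (a : X) : X -> R := fun x => if `[< x = a >] then 1 else 0.

Lemma CP_ind (P : set (set X)) (a : X) : accessible_space X -> closed_ideal P ->
  (forall x : X, P [set x]) -> CP P (ind a).
Proof.
move=> acc [Pc P0 PU PS] P1; rewrite /CP /=.
apply: (PS _ _ (P1 a)); first exact: closed_closure.
have cl := accessible_closed_set1 acc (x:=a).
rewrite [X in _ `<=` X](closure_id _).1 //; apply: closureS.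
move=> x /= Hx; apply: contrapT => xa; apply: Hx.
have nb : nbhs x (~` [set a]) by apply: open_nbhs_nbhs; split => //; rewrite openC.
move=> V /= HV; apply: filterS nb => y /= ya.
have -> : ind a y = ind a x by rewrite /ind; do 2 case: asboolP => //.
exact: nbhs_singleton.
Qed.


Lemma key (P : set (set X)) (J : set (X -> R)) : CP_ideal P J ->
  (forall g : X -> R, CP P g) ->
  forall t : seq X, forall f : X -> R,
  (forall x, f x != 0 -> x \in t) ->
  (forall x, f x != 0 -> exists h, J h /\ h x != 0) -> J f.
Proof.
case=> _ J0 JD _ JM allCP; elim=> [|a t IH] f H1 H2.
  have -> : f = (fun _ => 0) by apply: funext => x; case: (eqVneq (f x) 0) => // /H1.
  exact: J0.
pose g := fun x => if `[< x = a >] then 0 else f x.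
pose k := fun x => if `[< x = a >] then f x else 0.
have -> : f = g \+ k by apply: funext => x; rewrite /g /k /=; case: asboolP => _; rewrite ?add0r ?addr0.
apply: JD.
  apply: IH => x; rewrite /g; case: asboolP => [_|xa fx]; rewrite ?eqxx //.
    by have := H1 _ fx; rewrite inE => /orP [/eqP|].
  exact: H2.
case: (eqVneq (f a) 0) => fa.
  have -> : k = (fun _ => 0) by apply: funext => x; rewrite /k; case: asboolP => // ->.
  exact: J0.
have [h [Jh ha]] := H2 _ fa.
have -> : k = (fun x => if `[< x = a >] then f a / h a else 0) \* h.
  apply: funext => x; rewrite /k /=; case: asboolP => [->|_]; last by rewrite mul0r.
  by rewrite divfK.
exact: JM.
Qed.

Lemma finite_discrete (f : X -> R) : accessible_space X -> finite_set [set: X] ->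
  discont f = set0.
Proof.
move=> acc fin; apply/seteqP; split => // x /= H; apply: H.
have op : open [set x].
  rewrite -[[set x]]setCK openC; apply: (accessible_finite_set_closed.1 acc).
  exact: sub_finite_set fin.
have nb : nbhs x [set x] by apply: open_nbhs_nbhs; split.
move=> V /= HV; apply: filterS nb => y /= -> ; exact: nbhs_singleton.
Qed.

End Helpers.

Theorem corollary5p10 (R : realType) (X : topologicalType)
  (P : set (set X)) :
  @accessible_space X ->
  closed_ideal P ->
  (forall x : X, P [set x]) ->
  (@CP_artinian X R P <-> finite_set [set: X]).
Proof.
move=> acc HP P1; split.
- move=> art; apply: contrapT => inf.
  have ex : forall t : seq X, exists x : X, x \notin t.
    move=> t; apply: contrapT => /forallNP H; apply: inf.
    apply: (sub_finite_set _ (finite_seq t)) => x _ /=.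
    by have := H x; case: (x \in t).
  have [nx Hnx] := choice ex.
  pose s n := iter n (fun t => nx t :: t) [::].
  pose I n := [set f : X -> R | CP P f /\ forall y, y \in s n -> f y = 0%R].
  have Iid : forall n, CP_ideal P (I n).
    move=> n; split.
    * by move=> f [].
    * split; [exact: CP0|by []].
    * move=> f g [Cf Zf] [Cg Zg]; split; first exact: (CP_sub HP (discontD f g)).
      by move=> y ys; rewrite /= Zf // Zg // GRing.addr0.
    * move=> f [Cf Zf]; split; first exact: (CP_sub HP (discontN f)).
      by move=> y ys; rewrite Zf // GRing.oppr0.
    * move=> f g Cg [Cf Zf]; split; first exact: (CP_sub HP (discontM g f)).
      by move=> y ys; rewrite /= Zf // GRing.mulr0.
  have Idec : forall n, I n.+1 `<=` I n.
    move=> n f [Cf Zf]; split => // y ys; apply: Zf.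
    by rewrite /s /= inE ys orbT.
  have [N HN] := art I Iid Idec.
  have := HN N.+1 (leqnSn N).
  set a := nx (s N).
  have IN : I N (ind a).
    split; first exact: CP_ind.
    move=> y ys; rewrite /ind; case: asboolP => // ya.
    by move: (Hnx (s N)); rewrite -/a -ya ys.
  move=> E; move: IN; rewrite -E => -[_ /(_ a)]; rewrite /ind.
  case: asboolP => // _ H.
  have : (1%R : R) = 0%R by apply: H; rewrite /s /= inE eqxx.
  by move/eqP; rewrite GRing.oner_eq0.
- move=> fin I Iid Idec.
  have allCP : forall g : X -> R, CP P g := fun g => CP_all HP (finite_discrete g acc fin).
  have [s0 Hs0] := (finite_seqP _).1 fin.
  have ins : forall x, x \in s0 by move=> x; have : [set` s0] x by rewrite -Hs0.
  have chain : forall N n, (N <= n)%N -> I n `<=` I N.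
    move=> N n /subnK <-; elim: (n - N)%N => [|k IH] //=.
    rewrite addSn; exact: subset_trans (Idec _) IH.
  pose S n x := exists h, I n h /\ h x != 0%R.
  pose m n := count (fun x => `[< S n x >]) s0.
  have [N minN] : exists N, forall n, (m N <= m n)%N.
    suff : forall b n0, (m n0 <= b)%N -> exists N, forall n, (m N <= m n)%N.
      by move=> /(_ (m 0%N) 0%N (leqnn _)).
    elim=> [|b IH] n0 Hb.
      by exists n0 => n; move: Hb; rewrite leqn0 => /eqP ->.
    case: (pselect (exists n, (m n < m n0)%N)) => [[n Hn]|H].
      by apply: (IH n); rewrite -ltnS; exact: leq_trans Hn Hb.
    exists n0 => n; rewrite leqNgt; apply/negP => Hn; apply: H; by exists n.
  exists N => n Nn; apply/seteqP; split; first exact: chain.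
  move=> f INf; apply: (@key _ _ P (I n) (Iid n) allCP s0) => // x fx.
  apply: contrapT => nS.
  have SN : S N x by exists f.
  have SnN : forall y, S n y -> S N y.
    by move=> y [h [Ih hy]]; exists h; split=> //; exact: chain Ih.
  have E := count_predUI (fun y => `[< S n y >]) (fun y => `[< S N y >] && ~~ `[< S n y >]) s0.
  have E1 : count (predU (fun y => `[< S n y >]) (fun y => `[< S N y >] && ~~ `[< S n y >])) s0 = m N.
    apply: eq_count => y /=.
    case: (asboolP (S n y)) => Sny; case: (asboolP (S N y)) => SNy //=.
    by exfalso; exact: SNy (SnN _ Sny).
  have E2 : count (predI (fun y => `[< S n y >]) (fun y => `[< S N y >] && ~~ `[< S n y >])) s0 = 0%N.
    rewrite (eq_count (a2 := pred0)) ?count_pred0 // => y /=.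
    by case: (asboolP (S n y)) => _ /=; rewrite ?andbF.
  have pos : (0 < count (fun y => `[< S N y >] && ~~ `[< S n y >]) s0)%N.
    rewrite -has_count; apply/hasP; exists x => //=; apply/andP; split.
      exact/asboolP.
    by apply/negP => /asboolP.
  rewrite E1 E2 addn0 in E.
  have : (m n < m N)%N by rewrite E -[X in (X < _)%N]addn0 ltn_add2l.
  by rewrite ltnNge minN.
Qed.
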